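(* Let $p\equiv1\pmod4$ be a prime power and $q=\frac12(p+1)$. Then there exist four mutually quasi-unbiased weighing matrices for the parameters $(16q,16q,16,16q^2)$.
   Context: A weighing matrix of order $n$ and weight $k$ is an $n\times n$ $(0,1,-1)$-matrix $W$ with $WW^\top=kI_n$. Weighing matrices $W_1,W_2$ of order $n$ and weight $k$ are quasi-unbiased for parameters $(n,k,l,a)$ if $\frac1{\sqrt a}W_1W_2^\top$ is a weighing matrix of order $n$ and weight $l$; mutually quasi-unbiased means pairwise. *)

(* Defs.v *)
From HB Require Import structures.
From mathcomp Require Import all_boot all_order all_algebra all_field.
Set Implicit Arguments. Unset Strict Implicit. Unset Printing Implicit Defensive.
Import Order.TTheory GRing.Theory Num.Theory.
Local Open Scope ring_scope.

(* Matrices are taken over algC (algebraic complex numbers), which contains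
   the (0,1,-1) entries and square roots (sqrtC) needed for 1/sqrt(a). *)

Definition weighing_matrix (n k : nat) (W : 'M[algC]_n) : Prop :=
  (forall i j, W i j \in [:: 0; 1; -1]) /\ W *m W^T = (k%:R)%:M.
Arguments weighing_matrix : clear implicits.

Definition quasi_unbiased (n k l a : nat) (W1 W2 : 'M[algC]_n) : Prop :=
  [/\ weighing_matrix n k W1, weighing_matrix n k W2 &
      weighing_matrix n l ((sqrtC (a%:R))^-1 *: (W1 *m W2^T))].
Arguments quasi_unbiased : clear implicits.

Definition mutually_quasi_unbiased (m n k l a : nat) (W : 'I_m -> 'M[algC]_n) : Prop :=
  (forall i, weighing_matrix n k (W i)) /\
  (forall i j, i != j -> quasi_unbiased n k l a (W i) (W j)).
Arguments mutually_quasi_unbiased : clear implicits.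

Definition prime_power (p : nat) : Prop :=
  exists r e, prime r /\ (0 < e)%N /\ p = (r ^ e)%N.

(* Main.v *)
Require Import Defs.
From mathcomp Require Import all_boot all_order all_algebra all_field.
From mathcomp Require Import mxtens.
From mathcomp Require Import ring.
Set Implicit Arguments. Unset Strict Implicit. Unset Printing Implicit Defensive.
Import GRing.Theory Num.Theory.
Local Open Scope ring_scope.

Lemma sum_tens (R : nmodType) m n (f : 'I_(m*n) -> R) :
  \sum_(k < m*n) f k = \sum_(i < m) \sum_(j < n) f (mxtens_index (i, j)).
Proof.
rewrite pair_big /= (reindex (@mxtens_index m n)) /=.
  by apply: eq_bigr => -[i j].
by exists (@mxtens_unindex m n) => k _; [exact: mxtens_indexK|exact: mxtens_unindexK].
Qed.

Lemma ix_eq m n (a b : 'I_m * 'I_n) : (mxtens_index a == mxtens_index b) = (a == b).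
Proof. exact: (can_eq (@mxtens_indexK m n)). Qed.

Lemma sum_option (T : finType) (R : nmodType) (f : option T -> R) :
  \sum_x f x = f None + \sum_y f (Some y).
Proof.
rewrite (bigD1 None) //=; congr (_ + _).
rewrite (reindex_omap Some id) /=; last by case.
by apply: eq_bigl => y; rewrite eqxx.
Qed.
Definition bxor (a b : nat) : nat :=
  ((odd a) (+) (odd b)) + 2 * ((odd a./2) (+) (odd b./2)).
Definition gf4 (a b : nat) : nat :=
  match a, b with
  | 0, _ => 0 | _, 0 => 0
  | 1, x => x | x, 1 => x
  | 2, 2 => 3 | 2, 3 => 1 | 3, 2 => 1 | 3, 3 => 2 | _, _ => 0 end.
Definition inv4 (a : nat) : nat := match a with 2 => 3 | 3 => 2 | x => x end.
Definition b0n (i j x y : nat) : nat := gf4 (inv4 (bxor i j)) (bxor x y).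
Definition sgn (a b : nat) : bool := (odd a && odd b) (+) (odd a./2 && odd b./2).

Definition all4 (P : nat -> bool) := all P (iota 0 4).
Lemma all4P (P : nat -> bool) : all4 P -> forall i : 'I_4, P i.
Proof. by move=> /allP H i; apply: H; rewrite mem_iota /=. Qed.

Lemma bxor_lt a b : (bxor a b < 4)%N.
Proof. by rewrite /bxor; case: (_ (+) _); case: (_ (+) _). Qed.

Lemma check_b0 : all4 (fun i => all4 (fun j => all4 (fun x => all4 (fun y => all4 (fun b =>
   (i != j) ==> ((y == bxor (bxor (gf4 j b) (gf4 i b)) x) == (b == b0n i j x y))))))).
Proof. by []. Qed.
Lemma check_lt : all4 (fun i => all4 (fun j => all4 (fun x => all4 (fun y => all4 (fun b =>
   (gf4 i b < 4)%N && (b0n i j x y < 4)%N))))).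
Proof. by []. Qed.
Lemma check_kx : all4 (fun s => all4 (fun t => all4 (fun x =>
   bxor s (bxor t x) == bxor (bxor s t) x))).
Proof. by []. Qed.
Lemma check_kxx : all4 (fun s => all4 (fun x => bxor s (bxor s x) == x)).
Proof. by []. Qed.
Lemma check_sg : all4 (fun a => all4 (fun c =>
   (sgn a 0 (+) sgn c 0) + ((sgn a 1 (+) sgn c 1) + ((sgn a 2 (+) sgn c 2) + ((sgn a 3 (+) sgn c 3) + 0)))
   == if a == c then 0 else 2)%N).
Proof. by []. Qed.

Definition kx (a b : 'I_4) : 'I_4 := inord (bxor a b).
Definition dd (i b : 'I_4) : 'I_4 := inord (gf4 i b).
Definition b4 (i j x y : 'I_4) : 'I_4 := inord (b0n i j x y).

Lemma kxE a b : nat_of_ord (kx a b) = bxor a b.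
Proof. by rewrite /kx inordK // bxor_lt. Qed.
Lemma ddE i b : nat_of_ord (dd i b) = gf4 i b.
Proof. by rewrite /dd inordK //; have := all4P check_lt i => /all4P/(_ i) /all4P/(_ i)/all4P/(_ i)/all4P/(_ b)/andP[]. Qed.
Lemma b4E i j x y : nat_of_ord (b4 i j x y) = b0n i j x y.
Proof. by rewrite /b4 inordK //; have := all4P check_lt i => /all4P/(_ j) /all4P/(_ x)/all4P/(_ y)/all4P/(_ y)/andP[]. Qed.

Lemma kxA s t x : kx s (kx t x) = kx (kx s t) x.
Proof. apply: val_inj => /=; rewrite !kxE; apply/eqP.
have := all4P check_kx s => /all4P/(_ t)/all4P/(_ x); by []. Qed.
Lemma kxK s x : kx s (kx s x) = x.
Proof. apply: val_inj => /=; rewrite !kxE; apply/eqP.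
have := all4P check_kxx s => /all4P/(_ x); by []. Qed.

Lemma uniq_b (i j x y b : 'I_4) : i != j ->
  (y == kx (kx (dd j b) (dd i b)) x) = (b == b4 i j x y).
Proof.
move=> ij; rewrite -!val_eqE /= !(kxE, ddE, b4E).
have := all4P check_b0 i => /all4P/(_ j)/all4P/(_ x)/all4P/(_ y)/all4P/(_ b).
by rewrite val_eqE ij => /eqP.
Qed.

Lemma sum_sg (a c : 'I_4) :
  \sum_(b < 4) ((-1) ^+ (sgn a b (+) sgn c b) : algC) = (4 * (a == c))%:R.
Proof.
have step (t : bool) : ((-1) ^+ t : algC) = 1 - (t : nat)%:R *+ 2 by case: t; rewrite ?expr1 ?expr0 /=; [rewrite mulr2n opprD addrA subrr sub0r | rewrite mul0rn subr0].
under eq_bigr do rewrite step.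
rewrite sumrB sumr_const card_ord sumrMnl -natr_sum.
rewrite !big_ord_recl big_ord0 /= /bump /=.
have := all4P check_sg a => /all4P/(_ c)/eqP ->.
rewrite [(_ == _)%N]val_eqE.
by case: (a == c); apply/eqP; rewrite subr_eq -mulrnA -natrD.
Qed.

Notation un := mxtens_unindex.
Notation ix := mxtens_index.

Definition hh (a b : 'I_4) : algC := (-1) ^+ sgn a b.
Definition sgm q (t : 'I_4) (X : 'I_(4*q)) : 'I_(4*q) := ix (kx t (un X).1, (un X).2).
Definition Hfam q (H : 'M[algC]_(4*q)) (i : 'I_4) : 'M[algC]_(4*(4*q)) :=
  \matrix_(I, J) (hh (un I).1 (un J).1 * H (sgm (dd i (un J).1) (un I).2) (un J).2).

Lemma sig_ix q t x s : @sgm q t (ix (x, s)) = ix (kx t x, s).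
Proof. by rewrite /sgm mxtens_indexK. Qed.

Lemma sigK q t : cancel (@sgm q t) (@sgm q t).
Proof. move=> X; case: (mxtens_indexP X) => x s; by rewrite !sig_ix kxK. Qed.

Lemma sig_eq q s t (X Y : 'I_(4*q)) :
  (sgm s X == sgm t Y) = (Y == sgm (kx t s) X).
Proof.
rewrite -(can_eq (@sigK q t)) sigK eq_sym.
by case: (mxtens_indexP X) => x u; rewrite !sig_ix kxA.
Qed.

Lemma mem3_sign (b : bool) (x : algC) : x \in [:: 0; 1; -1] -> (-1) ^+ b * x \in [:: 0; 1; -1].
Proof.
case: b; rewrite ?expr0 ?mul1r // expr1 mulN1r !inE.
by case/or3P => /eqP ->; rewrite ?oppr0 ?opprK eqxx ?orbT.
Qed.

Lemma weighing_tr n k (W : 'M[algC]_n) : (0 < k)%N -> W *m W^T = (k%:R)%:M -> W^T *m W = (k%:R)%:M.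
Proof.
move=> k0 HW.
have kn0 : (k%:R : algC) != 0 by rewrite pnatr_eq0 -lt0n.
have : (k%:R^-1 *: W) *m W^T = 1%:M by rewrite -scalemxAl HW scale_scalar_mx mulVf.
move/mulmx1C; rewrite -scalemxAr => /(congr1 (fun M => k%:R *: M)).
by rewrite scalerA mulfV // scale1r => ->; rewrite scalemx1.
Qed.

Section Generic.
Variable q : nat.
Hypothesis q0 : (0 < q)%N.
Variable H : 'M[algC]_(4*q).
Hypothesis hH : weighing_matrix (4*q)%N (4*q)%N H.

Lemma Hfam_prod i j a c X Y :
  (Hfam H i *m (Hfam H j)^T) (ix (a, X)) (ix (c, Y)) =
  (4*q)%N%:R * \sum_(b < 4) hh a b * hh c b * (sgm (dd i b) X == sgm (dd j b) Y)%:R.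
Proof.
case: hH => _ HH.
rewrite !mxE sum_tens mulr_sumr; apply: eq_bigr => b _.
have -> : \sum_(Z < 4*q) Hfam H i (ix (a, X)) (ix (b, Z)) * (Hfam H j)^T (ix (b, Z)) (ix (c, Y))
   = hh a b * hh c b * (H *m H^T) (sgm (dd i b) X) (sgm (dd j b) Y).
  rewrite !mxE mulr_sumr; apply: eq_bigr => Z _; rewrite !mxE !mxtens_indexK /=.
  by rewrite mulrACA.
by rewrite HH mxE; case: (_ == _); rewrite ?mulr1n ?mulr0n ?mulr1 ?mulr0 // mulrC.
Qed.

Lemma hh_sum a c : \sum_(b < 4) hh a b * hh c b = (4 * (a == c))%:R.
Proof. by rewrite -sum_sg; apply: eq_bigr => b _; rewrite /hh signr_addb. Qed.

Lemma Hfam_weighing i : weighing_matrix (4*(4*q))%N (4*(4*q))%N (Hfam H i).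
Proof.
split.
  move=> I J; rewrite mxE; apply: mem3_sign; by case: hH.
apply/matrixP => I J.
case: (mxtens_indexP I) => a X; case: (mxtens_indexP J) => c Y.
rewrite Hfam_prod mxE ix_eq xpair_eqE.
under eq_bigr do rewrite (can_eq (@sigK q _)).
rewrite -mulr_suml hh_sum.
case: (a == c); case: (X == Y); rewrite /= ?mulr1 ?mulr0 ?muln0 ?mul0r //.
by rewrite mulr1n -natrM mulnC muln1.
Qed.

Lemma sqrt_a : (sqrtC ((16 * q^2)%N%:R))^-1 * (4*q)%N%:R = 1 :> algC.
Proof.
have -> : (16 * q^2)%N = ((4*q)^2)%N by rewrite expnMn.
rewrite natrX sqrCK ?ler0n // mulVf // pnatr_eq0 muln_eq0 /= -lt0n q0 //.
Qed.

Lemma sum_pick (f : 'I_4 -> algC) (b0 : 'I_4) (e : bool) :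
  \sum_(b < 4) f b * ((b == b0) && e)%:R = f b0 * e%:R.
Proof.
rewrite (bigD1 b0) //= eqxx /= big1 ?addr0 // => b /negbTE ->.
by rewrite mulr0.
Qed.

Lemma Hfam_cross i j : i != j ->
  weighing_matrix (4*(4*q))%N 16
    ((sqrtC ((16 * q^2)%N%:R))^-1 *: (Hfam H i *m (Hfam H j)^T)).
Proof.
move=> ij; split.
  move=> I J; rewrite mxE.
  case: (mxtens_indexP I) => a X; case: (mxtens_indexP J) => c Y.
  case: (mxtens_indexP X) => x s; case: (mxtens_indexP Y) => y t.
  rewrite Hfam_prod.
  under eq_bigr do rewrite sig_eq sig_ix ix_eq xpair_eqE (uniq_b _ _ _ ij).
  rewrite sum_pick -!mulrA (mulrA (sqrtC _)^-1) sqrt_a mul1r /hh; apply: mem3_sign; apply: mem3_sign.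
  by case: (_ == _); rewrite !inE eqxx ?orbT.
set k := (sqrtC _)^-1.
have Hi := Hfam_weighing i; have Hj := Hfam_weighing j.
case: Hi => _ Hi; case: Hj => _ Hj.
have pos : (0 < 4*(4*q))%N by rewrite !muln_gt0 q0.
have Hj' := weighing_tr pos Hj.
rewrite linearZ /= trmx_mul trmxK -scalemxAr -scalemxAl scalerA.
rewrite mulmxA -(mulmxA (Hfam H i)) Hj'.
rewrite mul_mx_scalar -scalemxAl Hi scale_scalar_mx scale_scalar_mx.
congr (_%:M).
have -> : ((4 * (4 * q))%N%:R : algC) = 4 * (4*q)%:R by rewrite natrM.
have e := sqrt_a; rewrite -/k in e.
transitivity ((k * (4*q)%N%:R) * (k * (4*q)%N%:R) * 16); first by ring.
by rewrite e !mul1r.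
Qed.

End Generic.

Lemma generic_main q (q0 : (0 < q)%N) (H : 'M[algC]_(4*q)) :
  weighing_matrix (4*q)%N (4*q)%N H ->
  exists W : 'I_4 -> 'M[algC]_(4*(4*q)),
    mutually_quasi_unbiased 4 (4*(4*q))%N (4*(4*q))%N 16 (16*q^2)%N W.
Proof.
move=> hH; exists (Hfam H); split => [i|i j ij]; first exact: Hfam_weighing.
by split; [exact: Hfam_weighing | exact: Hfam_weighing | exact: Hfam_cross].
Qed.

Lemma tensmxDl m n p r (A B : 'M[algC]_(m,n)) (C : 'M[algC]_(p,r)) :
  (A + B) *t C = A *t C + B *t C.
Proof.
by apply/matrixP => i j; rewrite !mxE mulrDl.
Qed.
Lemma tensmxDr m n p r (A : 'M[algC]_(m,n)) (B C : 'M[algC]_(p,r)) :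
  A *t (B + C) = A *t B + A *t C.
Proof.
by apply/matrixP => i j; rewrite !mxE mulrDr.
Qed.
Lemma tens_scal m n (a b : algC) : (a%:M : 'M_m) *t (b%:M : 'M_n) = (a * b)%:M.
Proof.
apply/matrixP => i j; case: (mxtens_indexP i) => i1 i2; case: (mxtens_indexP j) => j1 j2.
rewrite tensmxE !mxE ix_eq xpair_eqE.
by case: (i1 == j1); case: (i2 == j2); rewrite ?mulr1n ?mulr0n ?mulr0 ?mul0r.
Qed.

Definition A2 : 'M[algC]_2 := \matrix_(e, f) (-1) ^+ ((e == 1 :> nat) && (f == 0 :> nat)).
Definition B2 : 'M[algC]_2 := \matrix_(e, f) (-1) ^+ ((e == 0 :> nat) && (f == 1 :> nat)).

Ltac small2 :=
  apply/matrixP; do 2 (case => [[|[|//]] ?]);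
  rewrite !mxE ?big_ord_recl ?big_ord0 !mxE ?big_ord_recl ?big_ord0 ?mxE /=;
  rewrite ?mxE /= ?expr0 ?expr1 ?mulr1 ?mulrNN ?mulN1r ?mul1r ?addr0 ?mulr1n ?mulr0n ?oppr0 //;
  try (by rewrite subrr); try (by rewrite addrC subrr); try ring.

Lemma A2A2 : A2 *m A2^T = 2%:M.
Proof. small2. Qed.
Lemma B2B2 : B2 *m B2^T = 2%:M.
Proof. small2. Qed.
Lemma A2B2 : A2 *m B2^T + B2 *m A2^T = 0.
Proof. small2. Qed.

Lemma addr_swap (V : zmodType) (a b c d : V) : a + b + (c + d) = (a + d) + (b + c).
Proof. by rewrite -!addrA; congr (_ + _); rewrite addrA addrC. Qed.

Lemma paley n p (C : 'M[algC]_n) :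
  C^T = C -> C *m C = (p%:R)%:M -> (forall i, C i i = 0) ->
  (forall i j, C i j \in [:: 0; 1; -1]) ->
  weighing_matrix (n*2)%N (p.+1*2)%N (C *t A2 + 1%:M *t B2).
Proof.
move=> CT CC Cd Cm; split.
  move=> I J; case: (mxtens_indexP I) => u e; case: (mxtens_indexP J) => v f.
  rewrite !mxE !mxtens_indexK /=.
  case: (eqVneq u v) => [->|uv].
    rewrite Cd mul0r add0r mulr1n mul1r -[X in X \in _]mulr1; apply: mem3_sign.
    by rewrite !inE eqxx ?orbT.
  by rewrite mul0r addr0 mulrC; apply: mem3_sign.
rewrite linearD /= !trmx_tens trmx1 CT !mulmxDl !mulmxDr !tensmx_mul.
rewrite mulmx1 mul1mx mulmx1 addr_swap -tensmxDr A2B2 tensmx0 addr0.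
rewrite CC A2A2 B2B2 !tens_scal -raddfD /=.
by congr (_%:M); rewrite mul1r -natrM -natrD mulSn addnC.
Qed.

From mathcomp Require Import zify.

Section Chi.
Variable F : finFieldType.
Hypothesis F4 : (#|F| %% 4 = 1)%N.
Local Notation p := #|F|.
Local Notation e := (p./2).

Lemma p_odd : odd p.
Proof.
have := modn2 p; rewrite -(modn_dvdm p (_ : 2 %| 4)%N) // F4 => /esym.
by case: (odd p).
Qed.

Lemma e2 : (e * 2 = p.-1)%N.
Proof. have := odd_double_half p; rewrite p_odd -muln2; lia. Qed.

Lemma e_even : ~~ odd e.
Proof.
have hk : p = (p %/ 4 * 4 + 1)%N by rewrite {1}(divn_eq p 4) F4.
have he : e = (2 * (p %/ 4))%N by have := e2; lia.
by rewrite he oddM.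
Qed.

Lemma e_ge2 : (2 <= e)%N.
Proof.
have hk : p = (p %/ 4 * 4 + 1)%N by rewrite {1}(divn_eq p 4) F4.
have := finNzRing_gt1 F; have := e2; move: (p %/ 4)%N hk => k hk; move: (#|F|./2) => e'; move: #|F| hk => p' hk.
lia.
Qed.

Lemma fermat (x : F) : x != 0 -> x ^+ p.-1 = 1.
Proof.
move=> nz; apply: (mulfI nz); rewrite mulr1 -exprS prednK ?expf_card //.
by have := finNzRing_gt1 F; lia.
Qed.

Lemma pow_e (x : F) : x != 0 -> (x ^+ e == 1) || (x ^+ e == -1).
Proof. by move=> nz; rewrite -sqrf_eq1 -exprM e2 fermat. Qed.

Definition chi (x : F) : algC := if x == 0 then 0 else if x ^+ e == 1 then 1 else -1.

Lemma chi0 : chi 0 = 0. Proof. by rewrite /chi eqxx. Qed.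
Lemma chi1 : chi 1 = 1. Proof. by rewrite /chi oner_eq0 expr1n eqxx. Qed.

Lemma chiM x y : chi (x * y) = chi x * chi y.
Proof.
rewrite /chi mulf_eq0.
case: (eqVneq x 0) => [->|nx]; first by rewrite /= mul0r.
case: (eqVneq y 0) => [->|ny]; first by rewrite orbT mulr0.
rewrite /= exprMn.
have := pow_e nx; have := pow_e ny.
case: (eqVneq (x ^+ e) 1) => [->|hx] /=; case: (eqVneq (y ^+ e) 1) => [->|hy] /=.
- by rewrite mulr1 eqxx mulr1.
- by rewrite mul1r (negbTE hy) mul1r.
- by rewrite mulr1 (negbTE hx) mulr1.
- move=> /eqP -> /eqP ->; by rewrite mulrNN mulr1 eqxx mulrNN mulr1.
Qed.

Lemma chi_sq x : x != 0 -> chi x * chi x = 1.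
Proof. by move=> nx; rewrite /chi (negbTE nx); case: (_ == _); rewrite ?mulr1 ?mulrNN ?mulr1. Qed.

Lemma chiN1 : chi (-1) = 1.
Proof.
rewrite /chi oppr_eq0 oner_eq0 -signr_odd (negbTE e_even) expr0 eqxx //.
Qed.

Lemma chi_sym x y : chi (x - y) = chi (y - x).
Proof. by rewrite -opprB -mulN1r chiM chiN1 mul1r. Qed.

Lemma nonsq : exists g : F, (g != 0) && (g ^+ e != 1).
Proof.
case: (boolP [exists g : F, (g != 0) && (g ^+ e != 1)]) => [/existsP //|/existsPn Hall].
exfalso.
pose P : {poly F} := 'X^e - 1.
have e0 : (0 < e)%N by have := e_ge2; lia.
have Pn0 : P != 0 by rewrite -size_poly_gt0 size_Xn_sub_1.
have := @max_poly_roots _ P (enum [pred x : F | x != 0]) Pn0.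
rewrite enum_uniq size_Xn_sub_1 // -cardE cardC1.
have -> : all (root P) (enum [pred x : F | x != 0]).
  apply/allP => x; rewrite mem_enum inE => nx.
  rewrite /root /P !hornerE subr_eq0.
  by have := Hall x; rewrite nx /= negbK.
move=> /(_ isT isT); have := e2; have := e_ge2; move: (#|F|./2) (#|F|.-1) => e' m; lia.
Qed.

Lemma sum_chi : \sum_x chi x = 0.
Proof.
have [g /andP [gn ge]] := nonsq.
have cg : chi g = -1 by rewrite /chi (negbTE gn) (negbTE ge).
have H : \sum_x chi x = - \sum_x chi x.
  rewrite {1}(reindex_inj (mulfI gn)) /=.
  by under eq_bigr do rewrite chiM cg mulN1r; rewrite sumrN.
have : (\sum_x chi x) *+ 2 == 0 by rewrite mulr2n {1}H addNr.
by rewrite mulrn_eq0 /= => /eqP.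
Qed.

Lemma sum_eq0 (x : F) : \sum_y ((y == x)%:R : algC) = 1.
Proof. by rewrite (bigD1 x) //= eqxx big1 ?addr0 // => y /negbTE ->. Qed.

Lemma chi_corr a b : a != b -> \sum_x chi (x - a) * chi (x - b) = -1.
Proof.
move=> ab.
rewrite (reindex_inj (addIr a)) /=.
have cn : a - b != 0 by rewrite subr_eq0.
under eq_bigr do rewrite addrK -addrA.
move: (a - b) cn => c cn.
have pt y : chi y * chi (y + c) = chi (1 + c * y^-1) - (y == 0)%:R.
  case: (eqVneq y 0) => [->|ny]; first by rewrite invr0 mulr0 addr0 chi0 mul0r chi1 subrr.
  have -> : 1 + c * y^-1 = (y + c) * y^-1 by rewrite mulrDl mulfV.
  have h1 : chi y * chi y^-1 = 1 by rewrite -chiM mulfV // chi1.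
  have h2 : chi y^-1 = chi y by rewrite -[LHS]mul1r -(chi_sq ny) -mulrA h1 mulr1.
  by rewrite chiM h2 /= mulr0n subr0 mulrC.
under eq_bigr do rewrite pt.
rewrite sumrB sum_eq0.
have inj : injective (fun y : F => 1 + c * y^-1).
  by move=> y z /addrI /(mulfI cn) /invr_inj.
have -> : \sum_i chi (1 + c / i) = \sum_i chi i by rewrite [RHS](reindex_inj inj).
by rewrite sum_chi sub0r.
Qed.

Lemma sum_chi_sub x : \sum_z chi (x - z) = 0.
Proof.
rewrite (reindex_inj (subrI x)) /=.
by under eq_bigr do rewrite opprB addrC subrK; rewrite sum_chi.
Qed.

Lemma chi_sq_sum x : \sum_z chi (x - z) * chi (x - z) = p%:R - 1.
Proof.
have pt z : chi (x - z) * chi (x - z) = 1 - (z == x)%:R.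
  case: (eqVneq z x) => [->|nz]; first by rewrite subrr chi0 mul0r subrr.
  by rewrite chi_sq ?subr0 // subr_eq0 eq_sym.
under eq_bigr do rewrite pt.
by rewrite sumrB sum_eq0 sumr_const.
Qed.

End Chi.

Section Conf.
Variable F : finFieldType.
Hypothesis F4 : (#|F| %% 4 = 1)%N.
Local Notation chi := (@chi F).

Definition Cf (u v : option F) : algC :=
  match u, v with
  | Some x, Some y => chi (x - y)
  | None, None => 0
  | _, _ => 1
  end.

Lemma Cf_sym u v : Cf u v = Cf v u.
Proof. by case: u => [x|]; case: v => [y|] //=; rewrite chi_sym. Qed.

Lemma Cf_diag u : Cf u u = 0.
Proof. by case: u => [x|] //=; rewrite subrr chi0. Qed.

Lemma Cf_mem u v : Cf u v \in [:: 0; 1; -1].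
Proof.
case: u => [x|]; case: v => [y|] //=; rewrite ?inE ?eqxx ?orbT //.
rewrite /chi; case: ifP => _; last case: ifP => _.
all: by rewrite ?inE eqxx ?orbT.
Qed.

Lemma Cf_prod u v : \sum_w Cf u w * Cf w v = (#|F|%:R) * (u == v)%:R.
Proof.
rewrite sum_option.
case: u => [x|]; case: v => [y|] /=.
- rewrite mul1r.
  case: (eqVneq x y) => [->|xy].
    under eq_bigr => z _ do rewrite (chi_sym F4 z).
    by rewrite chi_sq_sum // addrC subrK eqxx mulr1.
  under eq_bigr => z _ do rewrite (chi_sym F4 x).
  by rewrite chi_corr // subrr -[Some x == Some y]/(x == y) (negbTE xy) mulr0.
- rewrite mulr0 add0r mulr0.
  by under eq_bigr do rewrite mulr1; rewrite sum_chi_sub.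
- rewrite mul0r add0r mulr0.
  under eq_bigr => z _ do rewrite mul1r (chi_sym F4 z).
  by rewrite sum_chi_sub.
- rewrite mul0r add0r mulr1.
  by rewrite sumr_const mulr1.
Qed.

Definition Cm : 'M[algC]_#|{: option F}| := \matrix_(i, j) Cf (enum_val i) (enum_val j).

Lemma Cm_props :
  [/\ Cm^T = Cm, Cm *m Cm = (#|F|%:R)%:M, (forall i, Cm i i = 0) &
      (forall i j, Cm i j \in [:: 0; 1; -1])].
Proof.
split.
- by apply/matrixP => i j; rewrite /Cm !mxE Cf_sym.
- apply/matrixP => i j; rewrite /Cm !mxE.
  under eq_bigr do rewrite !mxE.
  rewrite -(big_enum_val (fun w => Cf (enum_val i) w * Cf w (enum_val j))) /=.
  rewrite (eq_bigl xpredT) ?Cf_prod; last by move=> w; rewrite inE.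
  by rewrite (inj_eq enum_val_inj); case: (i == j); rewrite ?mulr1 ?mulr0.
- by move=> i; rewrite /Cm mxE Cf_diag.
- by move=> i j; rewrite /Cm mxE Cf_mem.
Qed.

End Conf.

Local Close Scope ring_scope.

Theorem corollary4p12 (p : nat) :
  prime_power p -> p = 1 %[mod 4] ->
  let q := (p.+1)./2 in
  exists W : 'I_4 -> 'M[algC]_(16 * q),
    mutually_quasi_unbiased 4 (16 * q) (16 * q) 16 (16 * q ^ 2) W.
Proof.
move=> [r [k [pr [k0 pE]]]] hmod q.
have [F _ cardF] := pPrimePowerField pr k0.
rewrite -pE in cardF.
have F4 : (#|F| %% 4 = 1)%N by rewrite cardF hmod.
have podd := p_odd F4; rewrite cardF in podd.
have hq : p.+1 = (q * 2)%N.
  by rewrite /q muln2 -[in LHS](odd_double_half p.+1) /= podd.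
have q0 : (0 < q)%N by lia.
have [CT CC Cd Cm'] := Cm_props F4.
have HP := paley CT CC Cd Cm'.
have [H hH] : exists H : 'M[algC]_(4*q), weighing_matrix (4*q) (4*q) H.
  have e1 : (4 * q = #|{: option F}| * 2)%N by rewrite card_option cardF hq; lia.
  have e2 : (#|F|.+1 * 2 = #|{: option F}| * 2)%N by rewrite card_option.
  rewrite e2 in HP; rewrite e1; eexists; exact: HP.
have [W hW] := generic_main q0 hH.
have e : 16 * q = 4 * (4 * q) by rewrite mulnA.
rewrite e.
by exists W.
Qed.
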